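(* Let $x\in P$ be a search point in the population $P$ of DEMO on the weighted vertex cover problem such that $Cost(x)+2\cdot LP(x)\le 2\cdot OPT$ and $b_2(x)>0$. Then there exists a 1-bit flip of $x$ leading to a search point $x'$ with $Cost(x')+2\cdot LP(x')\le 2\cdot OPT$ and $b_2(x')<b_2(x)$.
   Context: Weighted vertex cover: $G=(V,E)$, $V=\{v_1,\dots,v_n\}$, $w:V\to\mathbb{N}^+$; $OPT$ is the minimum weight of a vertex cover. Search points $x\in\{0,1\}^n$; $Cost(x)=\sum_i w(v_i)x_i$; $G(x)=(V(x),E(x))$ with $V(x)=V\setminus\{v_i:x_i=1\}$, $E(x)$ = edges with no selected endpoint; $LP(x)$ = optimal value of: minimize $\sum_{v_i\in V(x)}w(v_i)y_i$ s.t. $y_i+y_j\ge1$ for $\{v_i,v_j\}\in E(x)$, $0\le y_i\le1$. $f(x)=(Cost(x),LP(x))$, $f(x)\le f(y)$ componentwise. DEMO: $\delta=\frac1{2n}$, $b_1(x)=\lceil\log_{1+\delta}(1+Cost(x))\rceil$, $b_2(x)=\lceil\log_{1+\delta}(1+LP(x))\rceil$, $b=(b_1,b_2)$. Start with uniformly random $x$, $P=\{x\}$. Each iteration: choose $x\in P$ uniformly; create $x'$ by flipping each bit independently with probability $1/n$; if some $y\in P$ satisfies ($f(y)\le f(x')$ and $f(y)\ne f(x')$) or ($b(y)=b(x')$ and $Cost(y)+2LP(y)\le Cost(x')+2LP(x')$), discard $x'$; otherwise add $x'$ and delete all other $z\in P$ with $f(x')\le f(z)$ or $b(z)=b(x')$.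 *)

(* Defs.v *)
From HB Require Import structures.
From mathcomp Require Import all_boot all_order all_algebra.
From mathcomp Require Import all_classical all_reals all_analysis.
Set Implicit Arguments. Unset Strict Implicit. Unset Printing Implicit Defensive.
Import Order.TTheory GRing.Theory Num.Theory.
Local Open Scope ring_scope.
Local Open Scope classical_set_scope.

(* A search point is x : {ffun 'I_n -> bool}; x i = true means v_i is selected. *)

Section WVC.
Variables (R : realType) (n : nat) (e : rel 'I_n) (w : 'I_n -> nat).

Definition Cost (x : {ffun 'I_n -> bool}) : nat := (\sum_(i < n | x i) w i)%N.

Definition is_vertex_cover (S : {set 'I_n}) : bool :=
  [forall i, forall j, e i j ==> (i \in S) || (j \in S)].
Definition set_weight (S : {set 'I_n}) : nat := (\sum_(i in S) w i)%N.
Definition OPT : nat :=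
  \big[minn/set_weight [set: 'I_n]%SET]_(S : {set 'I_n} | is_vertex_cover S) set_weight S.

(* LP(x): minimise sum_{v_i in V(x)} w(v_i) y_i subject to
   y_i + y_j >= 1 for {v_i,v_j} in E(x), 0 <= y_i <= 1 for v_i in V(x).
   (Coordinates of y outside V(x) are irrelevant.) *)
Definition LP_feasible (x : {ffun 'I_n -> bool}) (y : 'I_n -> R) : Prop :=
  (forall i j, e i j -> ~~ x i -> ~~ x j -> 1 <= y i + y j) /\
  (forall i, ~~ x i -> 0 <= y i <= 1).
Definition LP_obj (x : {ffun 'I_n -> bool}) (y : 'I_n -> R) : R :=
  \sum_(i < n | ~~ x i) (w i)%:R * y i.
Definition LP (x : {ffun 'I_n -> bool}) : R :=
  inf [set v | exists y, LP_feasible x y /\ v = LP_obj x y].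

Definition delta : R := ((2 * n)%:R)^-1.
Definition b2 (x : {ffun 'I_n -> bool}) : int :=
  Num.ceil (ln (1 + LP x) / ln (1 + delta)).

End WVC.

Definition flip n (x : {ffun 'I_n -> bool}) (i : 'I_n) : {ffun 'I_n -> bool} :=
  [ffun j => if j == i then ~~ x j else x j].

(* Main.v *)
Require Import Defs.
From HB Require Import structures.
From mathcomp Require Import all_boot all_order all_algebra.
From mathcomp Require Import all_classical all_reals all_analysis.
From mathcomp Require Import ring lra zify.
Import Order.TTheory GRing.Theory Num.Theory.
Local Open Scope ring_scope.

Section Helpers.
Variables (R : realType) (n : nat) (e : rel 'I_n) (w : 'I_n -> nat).

Lemma obj_ge0 x (y : 'I_n -> R) : LP_feasible e x y -> 0 <= LP_obj w x y.
Proof.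
move=> [_ H]; rewrite /LP_obj; apply: sumr_ge0 => i xi.
by apply: mulr_ge0; [exact: ler0n | case/andP: (H i xi)].
Qed.

Lemma feas1 x : LP_feasible e x (fun _ => 1 : R).
Proof. by split=> [i j _ _ _|i _]; rewrite ?ler01 ?lexx //; lra. Qed.

Lemma LP_hasinf x : has_inf [set v : R | exists y, LP_feasible e x y /\ v = LP_obj w x y].
Proof.
split; first by exists (LP_obj w x (fun _ => 1)); exists (fun _ => 1); split=> //; exact: feas1.
by exists 0 => v [y [Hy ->]]; exact: obj_ge0.
Qed.

Lemma LP_le x (y : 'I_n -> R) : LP_feasible e x y -> LP R e w x <= LP_obj w x y.
Proof.
move=> Hy; apply: inf_lbound; first exact: (LP_hasinf x).2.
by exists y.
Qed.

Lemma LP_ge0 x : 0 <= LP R e w x.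
Proof.
apply: lb_le_inf; first exact: (LP_hasinf x).1.
by move=> v [y [Hy ->]]; exact: obj_ge0.
Qed.

Lemma LP_approx x (eps : R) : 0 < eps ->
  exists y, LP_feasible e x y /\ LP_obj w x y < LP R e w x + eps.
Proof.
move=> he; have [v [y [Hy ->]] Hv] := inf_adherent he (LP_hasinf x).
by exists y.
Qed.

Lemma feas_flip (x : {ffun 'I_n -> bool}) (y : 'I_n -> R) (v : 'I_n) : ~~ x v -> LP_feasible e x y -> LP_feasible e (flip x v) y.
Proof.
move=> xv [H1 H2]; split.
- move=> i j eij; rewrite !ffunE.
  case: eqP => [->|_]; case: eqP => [->|_]; rewrite ?negbK => hi hj;
    by [rewrite hi in xv | rewrite hj in xv | apply: H1].
- move=> i; rewrite ffunE; case: eqP => [->|_] hi; last exact: H2.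
  by rewrite (negPn hi) in xv.
Qed.

Lemma Cost_flip (x : {ffun 'I_n -> bool}) (v : 'I_n) : ~~ x v ->
  Cost w (flip x v) = (Cost w x + w v)%N.
Proof.
move=> xv; rewrite /Cost (bigD1 v) /= ?ffunE ?eqxx //.
rewrite addnC; congr (_ + _)%N; apply: eq_bigl => i; rewrite ffunE.
case: eqP => [->|_] /=; last by rewrite andbT.
by rewrite (negbTE xv).
Qed.

Lemma obj_flip (x : {ffun 'I_n -> bool}) (y : 'I_n -> R) (v : 'I_n) : ~~ x v ->
  LP_obj w (flip x v) y = LP_obj w x y - (w v)%:R * y v.
Proof.
move=> xv; rewrite /LP_obj [in RHS](bigD1 v) //= addrC addrK.
apply: eq_bigl => i; rewrite ffunE.
case: eqP => [->|_] /=; last by rewrite andbT.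
by rewrite (negbTE xv).
Qed.

Lemma fin_limit (T : finType) (P : pred T) (f : T -> R) :
  (forall eps : R, 0 < eps -> exists v, P v /\ f v <= eps) ->
  exists v, P v /\ f v <= 0.
Proof.
move=> H; apply: contrapT => Hn.
have Hpos : forall v, P v -> 0 < f v.
  move=> v Pv; rewrite ltNge; apply/negP => hv; apply: Hn; by exists v.
set m := \big[Order.min/1]_(v | P v) f v.
have m0 : 0 < m by apply: lt_bigmin => //; exact: ltr01.
have [v [Pv hv]] := H (m / 2) (divr_gt0 m0 (ltr0Sn _ 1)).
have : m <= f v by exact: bigmin_le_cond.
lra.
Qed.

Lemma ceil_lt (A B : R) : A <= B - 1 -> Num.ceil A < Num.ceil B.
Proof.
move=> h.
have h1 : Num.ceil A <= Num.ceil B - 1.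
  rewrite ceil_le_int; have /andP[_ hb] := ceil_itv B.
  rewrite intrD; apply: (le_trans h); rewrite lerD2r //.
by apply: (le_lt_trans h1); rewrite ltrBlDr ltrDl ltr01.
Qed.

End Helpers.

Arguments LP_le {R n e w x y}.
Arguments LP_ge0 R {n} e w x.
Arguments LP_approx {R n} e w x {eps}.
Arguments feas_flip {R n e x y v}.
Arguments Cost_flip {n} w {x v}.
Arguments obj_flip {R n} w {x y v}.
Arguments fin_limit {R T} P f.

Theorem lemma8 (R : realType) (n : nat) (e : rel 'I_n) (w : 'I_n -> nat)
  (e_sym : symmetric e) (e_irr : irreflexive e)
  (w_pos : forall i, (0 < w i)%N)
  (x : {ffun 'I_n -> bool})
  (hx : (Cost w x)%:R + 2 * LP R e w x <= 2 * (OPT e w)%:R)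
  (hb : (0 < b2 R e w x)%R) :
  exists i : 'I_n,
    (Cost w (flip x i))%:R + 2 * LP R e w (flip x i) <= 2 * (OPT e w)%:R
    /\ (b2 R e w (flip x i) < b2 R e w x)%R.
Proof.
have [i [j [eij [xi xj]]]] : exists i j, e i j /\ ~~ x i /\ ~~ x j.
  apply: contrapT => Hn.
  have H0 : LP_feasible e x (fun _ => 0 : R).
    split => [i j eij xi xj | i _]; last by rewrite lexx ler01.
    by exfalso; apply: Hn; exists i, j.
  have Hle : LP R e w x <= 0.
    apply: (le_trans (LP_le H0)); rewrite /LP_obj big1 // => i _; by rewrite mulr0.
  have HL : LP R e w x = 0 by apply/eqP; rewrite eq_le Hle LP_ge0.
  by move: hb; rewrite /b2 HL addr0 ln1 mul0r ceil0 ltxx.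
have ij : i != j by apply/eqP => eqij; rewrite eqij e_irr in eij.
have n2 : (1 < n)%N.
  have := ltn_ord i; have := ltn_ord j; move: ij; rewrite -(inj_eq val_inj) /=.
  lia.
set N : R := n%:R.
have N2 : 2 <= N by rewrite /N (ler_nat R 2 n).
set d := delta R n.
have hd : 2 * N * d = 1.
  by rewrite /d /delta natrM -/N mulfV // mulf_neq0 // ?pnatr_eq0 //; lia.
have d0 : 0 < d by rewrite /d /delta invr_gt0 ltr0n muln_gt0 /=; lia.
have Ld0 : 0 < ln (1 + d) by apply: ln_gt0; lra.
pose P v := (b2 R e w (flip x v) < b2 R e w x) && ~~ x v.
pose f v := LP R e w (flip x v) - LP R e w x + (w v)%:R / 2.
have claim : forall eps0 : R, 0 < eps0 -> exists v, P v /\ f v <= eps0.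
  move=> eps0 heps0.
  set eps := Num.min eps0 (4 * N + 2)^-1.
  have c0 : 0 < (4 * N + 2)^-1 by rewrite invr_gt0; lra.
  have heps : 0 < eps by rewrite lt_min heps0 c0.
  have epsle : eps <= eps0 by rewrite ge_min lexx.
  have epsc : eps * (4 * N + 2) <= 1.
    have : eps <= (4 * N + 2)^-1 by rewrite ge_min lexx orbT.
    move=> h; have c4 : 0 < 4 * N + 2 by lra.
    by have := ler_wpM2r (ltW c4) h; rewrite mulVf ?gt_eqF.
  have [y [Hy Hobj]] := LP_approx e w x heps.
  have Su : exists u, ~~ x u && (1/2 <= y u).
    have := Hy.1 i j eij xi xj.
    case: (lerP (1/2) (y i)) => hyi; first by exists i; rewrite xi.
    by move=> hs; exists j; rewrite xj /=; lra.
  case: Su => u Su.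
  case: (@arg_maxP _ _ _ u (fun i => ~~ x i && (1/2 <= y i)) (fun i => (w i)%:R * y i) Su) => v /andP[xv yv] Hmax.
  set a := (w v)%:R * y v.
  have wv1 : 1 <= (w v)%:R :> R by rewrite ler1n w_pos.
  have a12 : (w v)%:R / 2 <= a.
    by have := ler_wpM2l (ler0n R (w v)) yv; rewrite /a; lra.
  have HLP' : LP R e w (flip x v) <= LP_obj w x y - a.
    by rewrite -obj_flip //; apply: LP_le; exact: feas_flip.
  have HLP'0 := LP_ge0 R e w (flip x v).
  have HLP0 := LP_ge0 R e w x.
  have a0 : 0 <= a by lra.
  have Hbound : LP R e w x <= N * a \/ LP R e w x <= 2 * (N - 1) * a.
    case: (pselect (exists u, ~~ x u && (y u < 1/2))) => [[u' /andP[xu yu]] | hno].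
    - right.
      pose z := fun i => (if 1/2 <= y i then 1 else 0) : R.
      have Hz : LP_feasible e x z.
        split => [i' j' eij' xi' xj' | i' _].
        + have := Hy.1 i' j' eij' xi' xj'; rewrite /z.
          by case: ifP => h1; case: ifP => h2 //; rewrite ?addr0 ?add0r ?lexx;
            move=> hs; try lra; rewrite ler_addl ?ler01 //; lra.
        + by rewrite /z; case: ifP; rewrite ?lexx ?ler01.
      apply: (le_trans (LP_le Hz)).
      rewrite /LP_obj big_mkcond (bigD1 u') //= xu /z.
      rewrite ifF; last by apply/negbTE; rewrite -ltNge.
      rewrite mulr0 add0r.
      apply: (@le_trans _ _ (\sum_(i0 | i0 != u') (2 * a))).
        apply: ler_sum => i0 _; case: ifP => hx0; last by lra.
        case: ifP => hy0; last by rewrite mulr0; lra.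
        have hm : (w i0)%:R * y i0 <= a by apply: (Hmax i0); rewrite hx0 hy0.
        have := ler_wpM2l (ler0n R (w i0)) hy0; lra.
      rewrite sumr_const cardC1 card_ord -[_ *+ n.-1]mulr_natr.
      have -> : N - 1 = (n.-1)%:R by rewrite /N -[in n%:R](prednK (ltnW n2)) -addn1 natrD addrK.
      by rewrite mulrAC.
    - left.
      apply: (le_trans (LP_le Hy)).
      rewrite /LP_obj big_mkcond.
      apply: (@le_trans _ _ (\sum_(i0 < n) a)).
        apply: ler_sum => i0 _; case: ifP => hx0; last by lra.
        have hy0 : 1/2 <= y i0.
          rewrite leNgt; apply/negP => h; apply: hno; exists i0; by rewrite hx0 h.
        by apply: (Hmax i0); rewrite hx0 hy0.
      by rewrite sumr_const card_ord -[_ *+ n]mulr_natr mulrC.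

  exists v; split; last by rewrite /f; lra.
  rewrite /P xv andbT /b2; apply: ceil_lt.
  have key : (1 + d) * (1 + LP R e w (flip x v)) <= 1 + LP R e w x.
    have a0h : 1/2 <= a by lra.
    set L := LP R e w x; set L' := LP R e w (flip x v).
    have h1 : L' <= L + eps - a by lra.
    have h2 : (1 + d) * (1 + L') <= (1 + d) * (1 + L + eps - a).
      by apply: ler_wpM2l; lra.
    set t := 1 + L + eps - a.
    have E : 2 * N * (d * t + eps - a) = t + 2 * N * (eps - a).
      have -> : 2 * N * (d * t + eps - a) = (2 * N * d) * t + 2 * N * (eps - a) by ring.
      by rewrite hd mul1r.
    have hp : 0 <= (N - 2) * (a - 1/2) by apply: mulr_ge0; lra.
    have E2 : 2 * N * (d * t + eps - a) <= 0.
      rewrite E /t; case: Hbound => hB; nra.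
    have T0 : d * t + eps - a <= 0.
      by rewrite -(pmulr_rle0 _ (_ : 0 < 2 * N)) //; lra.
    rewrite /t in T0 h2; nra.
  have hln : ln (1 + d) + ln (1 + LP R e w (flip x v)) <= ln (1 + LP R e w x).
    have p1 : 0 < 1 + d by lra.
    have p2 : 0 < 1 + LP R e w (flip x v) by lra.
    rewrite -(@lnM R (1 + d) (1 + LP R e w (flip x v))) ?posrE //.
    rewrite ler_ln ?posrE //; [exact: mulr_gt0 | lra].
  have -> : ln (1 + LP R e w x) / ln (1 + d) - 1 =
            (ln (1 + LP R e w x) - ln (1 + d)) / ln (1 + d).
    by field; rewrite gt_eqF.
  rewrite ler_pM2r ?invr_gt0 //; lra.
have [v [/andP[Hb xv] Hf]] := fin_limit P f claim.
exists v; split => //.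
rewrite Cost_flip // natrD; rewrite /f in Hf; lra.
Qed.
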